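(* Assume the thermal noise in the data phase is zero, $\mathbf N_D=\mathbf 0$, so that $\mathbf Y_D=\mathbf H\mathbf S_D+\mathbf J\mathbf W_D$. If the jammer is not eclipsed (in the sense of eclipsing with perfect CSI defined in the context), then the optimization problem $$\min_{\tilde{\mathbf S}_D\in\mathcal S^{U\times D},\ \tilde{\mathbf P}\in\mathscr G_{B-I}(\mathbb C^B)}\ \big\|\tilde{\mathbf P}(\mathbf Y_D-\mathbf H\tilde{\mathbf S}_D)\big\|_F^2$$ has the unique minimizer $(\hat{\mathbf P},\hat{\mathbf S}_D)=(\mathbf I_B-\mathbf J\mathbf J^\dagger,\ \mathbf S_D)$.
   Context: Let $B,U,I,D$ be positive integers with $B\ge U+I$. Let $\mathcal S=\{(\pm1\pm i)/\sqrt2\}\subset\mathbb C$ (QPSK). Let $\mathbf H\in\mathbb C^{B\times U}$ and $\mathbf J\in\mathbb C^{B\times I}$ be such that the concatenation $[\mathbf H,\mathbf J]\in\mathbb C^{B\times(U+I)}$ has full column rank $U+I$. Let $\mathbf S_D\in\mathcal S^{U\times D}$ (data matrix), $\mathbf W_D\in\mathbb C^{I\times D}$ (jammer transmit matrix), $\mathbf N_D\in\mathbb C^{B\times D}$, and $\mathbf Y_D=\mathbf H\mathbf S_D+\mathbf J\mathbf W_D+\mathbf N_D$. $\mathbf A^\dagger$ is the Moore–Penrose pseudoinverse. $\mathscr G_{B-I}(\mathbb C^B)$ denotes the set of $B\times B$ orthogonal projection matrices onto $(B-I)$-dimensional subspaces of $\mathbb C^B$, i.e. matrices $\mathbf I_B-\mathbf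 Q\mathbf Q^{\mathrm H}$ with $\mathbf Q\in\mathbb C^{B\times I}$ having orthonormal columns. Eclipsing with perfect CSI: the jammer is eclipsed if there exists $\tilde{\mathbf S}_D\in\mathcal S^{U\times D}\setminus\{\mathbf S_D\}$ such that the vertically stacked matrix $\begin{bmatrix}\mathbf S_D-\tilde{\mathbf S}_D\\ \mathbf W_D\end{bmatrix}\in\mathbb C^{(U+I)\times D}$ has rank at most $I$. *)

(* Defs.v *)
From mathcomp Require Import all_boot all_algebra complex reals.
Import GRing.Theory Num.Theory.
Set Implicit Arguments. Unset Strict Implicit. Unset Printing Implicit Defensive.
Local Open Scope ring_scope.

Section Defs.
Variable R : realType.
Notation C := (R[i]).

Definition adjmx m n (A : 'M[C]_(m, n)) : 'M[C]_(n, m) := (map_mx Num.conj A)^T.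

Definition qpsk (x : C) : Prop :=
  exists a b : bool, x = ((-1) ^+ a + (-1) ^+ b * 'i) / sqrtC 2.

Definition qpsk_mx m n (S : 'M[C]_(m, n)) : Prop := forall i j, qpsk (S i j).

Definition is_pinv m n (A : 'M[C]_(m, n)) (X : 'M[C]_(n, m)) : Prop :=
  [/\ A *m X *m A = A, X *m A *m X = X,
      adjmx (A *m X) = A *m X & adjmx (X *m A) = X *m A].

(* grass_proj B k P : P is in G_k(C^B), i.e. P = I_B - Q Q^H with
   Q in C^{B x (B-k)} having orthonormal columns (orthogonal projection onto a
   k-dimensional subspace). *)
Definition grass_proj (B k : nat) (P : 'M[C]_B) : Prop :=
  exists Q : 'M[C]_(B, B - k), adjmx Q *m Q = 1%:M /\ P = 1%:M - Q *m adjmx Q.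

Definition frob2 m n (A : 'M[C]_(m, n)) : C := \sum_i \sum_j `|A i j| ^+ 2.

Definition eclipsed (U I D : nat) (SD : 'M[C]_(U, D)) (WD : 'M[C]_(I, D)) : Prop :=
  exists St : 'M[C]_(U, D),
    [/\ qpsk_mx St, St <> SD & (\rank (col_mx (SD - St) WD) <= I)%N].

End Defs.
Arguments grass_proj {R} B k P.

(* Main.v *)
Require Import Defs.
From mathcomp Require Import all_boot all_algebra complex reals.
Import GRing.Theory Num.Theory.
From mathcomp Require Import order.
Import Order.POrderTheory.
Local Open Scope ring_scope.

Set Implicit Arguments. Unset Strict Implicit.
Section Aux.
Variable R : realType.
Local Notation C := (R[i]).

Lemma adjmxM m n p (A : 'M[C]_(m, n)) (B : 'M[C]_(n, p)) :
  adjmx (A *m B) = adjmx B *m adjmx A.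
Proof. by rewrite /adjmx (map_mxM Num.conj_op) trmx_mul. Qed.

Lemma adjmxK m n (A : 'M[C]_(m, n)) : adjmx (adjmx A) = A.
Proof. by apply/matrixP => i j; rewrite /adjmx !mxE conjCK. Qed.

Lemma adjmx1 n : adjmx (1%:M : 'M[C]_n) = 1%:M.
Proof. by apply/matrixP => i j; rewrite /adjmx !mxE conjC_nat eq_sym. Qed.

Lemma adjmxD m n (A B : 'M[C]_(m, n)) : adjmx (A + B) = adjmx A + adjmx B.
Proof. by apply/matrixP => i j; rewrite /adjmx !mxE rmorphD. Qed.

Lemma adjmxN m n (A : 'M[C]_(m, n)) : adjmx (- A) = - adjmx A.
Proof. by apply/matrixP => i j; rewrite /adjmx !mxE rmorphN. Qed.

Lemma adjmxB m n (A B : 'M[C]_(m, n)) : adjmx (A - B) = adjmx A - adjmx B.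
Proof. by rewrite adjmxD adjmxN. Qed.

Lemma adjmx0 m n : adjmx (0 : 'M[C]_(m, n)) = 0.
Proof. by apply/matrixP => i j; rewrite /adjmx !mxE conjC0. Qed.

Lemma adjmxZ m n a (A : 'M[C]_(m, n)) : adjmx (a *: A) = a^* *: adjmx A.
Proof. by apply/matrixP => i j; rewrite /adjmx !mxE rmorphM. Qed.

Lemma adjmx_col m1 m2 n (A : 'M[C]_(m1, n)) (B : 'M[C]_(m2, n)) :
  adjmx (col_mx A B) = row_mx (adjmx A) (adjmx B).
Proof. by rewrite /adjmx map_col_mx tr_col_mx. Qed.

Lemma rank_adjmx m n (A : 'M[C]_(m, n)) : \rank (adjmx A) = \rank A.
Proof. by rewrite /adjmx mxrank_tr (mxrank_map Num.conj_op). Qed.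

Lemma mul_adj_diag m n (A : 'M[C]_(m, n)) i :
  (A *m adjmx A) i i = \sum_j `|A i j| ^+ 2.
Proof. by rewrite mxE; apply: eq_bigr => j _; rewrite /adjmx !mxE normCK. Qed.


Lemma frob2_ge0 m n (A : 'M[C]_(m, n)) : 0 <= frob2 A.
Proof. by apply: sumr_ge0 => i _; apply: sumr_ge0 => j _; apply: exprn_ge0. Qed.

Lemma frob2_le0 m n (A : 'M[C]_(m, n)) : frob2 A <= 0 -> A = 0.
Proof.
move=> h; have h0 : frob2 A = 0 by apply/eqP; rewrite eq_le h frob2_ge0.
apply/matrixP => i j; rewrite mxE.
have := psumr_eq0P (fun i _ => sumr_ge0 _ (fun j _ => exprn_ge0 2 (normr_ge0 (A i j)))) h0 (i := i) isT.
move/(psumr_eq0P (fun j _ => exprn_ge0 2 (normr_ge0 (A i j)))) => /(_ j isT).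
by move/eqP; rewrite sqrf_eq0 normr_eq0 => /eqP.
Qed.

Lemma frob20 m n : frob2 (0 : 'M[C]_(m, n)) = 0.
Proof. by apply: big1 => i _; apply: big1 => j _; rewrite mxE normr0 expr0n. Qed.

Lemma gs n : forall k (A : 'M[C]_(k, n)), row_free A ->
  exists Q : 'M[C]_(k, n), Q *m adjmx Q = 1%:M /\ (Q <= A)%MS.
Proof.
elim=> [|k IH] A hA.
  by exists 0; split; [apply/matrixP => -[] | exact: sub0mx].
move: A hA; change (k.+1) with (1 + k)%N => A hA.
pose a : 'M[C]_(1, n) := usubmx (A : 'M_(1 + k, n)).
pose A' : 'M[C]_(k, n) := dsubmx (A : 'M_(1 + k, n)).
have eA : A = col_mx a A' by rewrite vsubmxK.
have rA : \rank A = k.+1 by apply/eqP.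
have aA : (a <= A)%MS.
  by rewrite eA; apply/submxP; exists (row_mx 1%:M 0); rewrite mul_row_col mul1mx mul0mx addr0.
have A'A : (A' <= A)%MS.
  by rewrite eA; apply/submxP; exists (row_mx 0 1%:M); rewrite mul_row_col mul1mx mul0mx add0r.
have rk : (\rank A <= 1 + \rank A')%N.
  rewrite eA; have [<- _] := addsmxE a A'; have [h _] := mxrank_adds_leqif a A'.
  by apply: leq_trans h _; rewrite leq_add2r rank_leq_row.
have fA' : row_free A'.
  by rewrite /row_free eqn_leq rank_leq_row -(leq_add2l 1) {1}add1n -rA.
have [Q' [hQ' sQ']] := IH A' fA'.
pose v := a - a *m adjmx Q' *m Q'.
have vQ : v *m adjmx Q' = 0.
  by rewrite mulmxBl -!mulmxA hQ' mulmx1 subrr.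
have v0 : v != 0.
  apply/eqP => /subr0_eq ea.
  have : (A <= A')%MS.
    rewrite eA col_mx_sub submx_refl andbT ea.
    exact: submx_trans (submxMl _ _) sQ'.
  move/mxrankS; rewrite rA.
  by move/leq_trans/(_ (rank_leq_row A')); rewrite ltnn.
pose s := (v *m adjmx v) 0 0.
have s_ge0 : 0 <= s by rewrite /s mul_adj_diag; apply: sumr_ge0 => j _; apply: exprn_ge0.
have s_neq0 : s != 0.
  apply: contra v0 => /eqP; rewrite /s mul_adj_diag => hs.
  apply/eqP/matrixP => i j; rewrite (ord1 i) [RHS]mxE.
  have := psumr_eq0P (fun j _ => exprn_ge0 2 (normr_ge0 (v 0 j))) hs (i := j) isT.
  by move/eqP; rewrite sqrf_eq0 normr_eq0 => /eqP.
pose c := (sqrtC s)^-1.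
have c_ge0 : 0 <= c by rewrite invr_ge0 sqrtC_ge0.
pose q := c *: v.
have qQ : q *m adjmx Q' = 0 by rewrite -scalemxAl vQ scaler0.
exists (col_mx q Q' : 'M_(1 + k, n)); split.
  have Qq : Q' *m adjmx q = 0 by rewrite -(adjmxK (Q' *m adjmx q)) adjmxM adjmxK qQ adjmx0.
  rewrite adjmx_col mul_col_row qQ hQ' Qq.
  rewrite (scalar_mx_block 1 k); congr block_mx.
  apply/matrixP => i j; rewrite !ord1 adjmxZ -scalemxAl -scalemxAr.
  rewrite geC0_conj // scalerA mxE -/s [RHS]mxE /= -expr2 /c exprVn sqrtCK.
  by rewrite mulVf.
rewrite col_mx_sub (submx_trans sQ' A'A) andbT.
apply: scalemx_sub; apply: addmx_sub aA _.
rewrite -mulNmx; exact: submx_trans (submxMl _ _) (submx_trans sQ' A'A).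
Qed.


Lemma rank_col m1 m2 n (A : 'M[C]_(m1, n)) (B : 'M[C]_(m2, n)) :
  (\rank (col_mx A B) <= \rank A + \rank B)%N.
Proof. by have [<- _] := addsmxE A B; have [h _] := mxrank_adds_leqif A B. Qed.

Lemma qpsk_neq0 (x : C) : qpsk x -> x != 0.
Proof.
case=> a [b ->]; rewrite mulf_eq0 invr_eq0 sqrtC_eq0 pnatr_eq0 orbF.
apply/negP => /eqP h.
have e : (-1) ^+ b * 'i = - (-1) ^+ a :> C.
  by apply/eqP; rewrite -subr_eq0 opprK addrC h.
have := congr1 (fun z => z ^+ 2) e; rewrite /= exprMn sqrCi sqrrN !sqrr_sign mul1r.
move/eqP; rewrite -subr_eq0 -opprD oppr_eq0 -mulr2n mulrn_eq0 oner_eq0 //.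
Qed.

Lemma L_proj B I n (J : 'M[C]_(B, I)) Jdag (Q : 'M[C]_(B, n)) M N :
  is_pinv J Jdag -> adjmx Q *m Q = 1%:M -> Q = J *m M -> J = Q *m N ->
  Q *m adjmx Q = J *m Jdag.
Proof.
case=> h1 h2 h3 h4 hQ eQ eJ.
have PJ : Q *m adjmx Q *m J = J.
  have : Q *m adjmx Q *m (Q *m N) = Q *m N by rewrite mulmxA -(mulmxA Q) hQ mulmx1.
  by rewrite -eJ.
have JQ : J *m Jdag *m Q = Q by rewrite {1}eQ mulmxA h1 -eQ.
have hP : adjmx (Q *m adjmx Q) = Q *m adjmx Q by rewrite adjmxM adjmxK.
have e1 : J *m Jdag = Q *m adjmx Q *m (J *m Jdag) by rewrite mulmxA PJ.
have e2 : Q *m adjmx Q = J *m Jdag *m (Q *m adjmx Q) by rewrite mulmxA JQ.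
have e3 : Q *m adjmx Q = Q *m adjmx Q *m (J *m Jdag).
  by rewrite -{1}hP {1}e2 adjmxM hP h3.
by rewrite e3 -e1.
Qed.

Lemma grass_of B k n (Q : 'M[C]_(B, n)) : n = (B - k)%N ->
  adjmx Q *m Q = 1%:M -> grass_proj B k (1%:M - Q *m adjmx Q).
Proof. by move=> en; subst n => hQ; exists Q. Qed.

Lemma part1 B I (J : 'M[C]_(B, I)) Jdag : \rank J = I -> is_pinv J Jdag ->
  exists Q : 'M[C]_(B, I), adjmx Q *m Q = 1%:M /\ Q *m adjmx Q = J *m Jdag.
Proof.
move=> rJ hpinv.
have fJ : row_free (adjmx J) by rewrite /row_free rank_adjmx rJ.
have [Qr [hQr sQr]] := gs fJ.
have rQr : \rank Qr = I.
  apply/eqP; rewrite eqn_leq rank_leq_row /=.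
  by rewrite -{1}(@mxrank1 C I) -hQr mxrankM_maxl.
have sJ : (adjmx J <= Qr)%MS.
  by have [_ <-] := mxrank_leqif_sup sQr; rewrite rQr rank_adjmx rJ.
have [D eD] := submxP sQr.
have [N eN] := submxP sJ.
exists (adjmx Qr); split; first by rewrite adjmxK.
apply: (L_proj (M := adjmx D) (N := adjmx N) hpinv).
- by rewrite adjmxK.
- by rewrite eD adjmxM adjmxK.
- by rewrite -adjmxM -eN adjmxK.
Qed.


Lemma WD_free U I D (SD : 'M[C]_(U, D)) (WD : 'M[C]_(I, D)) :
  (0 < U)%N -> (0 < D)%N -> qpsk_mx SD -> ~ eclipsed SD WD -> row_free WD.
Proof.
move=> hU hD hS hne; case: (boolP (row_free WD)) => // hnf; exfalso; apply: hne.
have rW : (\rank WD < I)%N by rewrite ltn_neqAle hnf rank_leq_row.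
pose i0 : 'I_U := Ordinal hU. pose j0 : 'I_D := Ordinal hD.
pose St := \matrix_(i, j) if (i == i0) && (j == j0) then - SD i j else SD i j.
exists St; split.
- move=> i j; rewrite mxE; case: ifP => _; last exact: hS.
  have [a [b ->]] := hS i j; exists (~~ a), (~~ b).
  by rewrite !signrN mulNr -opprD mulNr.
- move/matrixP/(_ i0 j0); rewrite mxE !eqxx /= => h.
  have := qpsk_neq0 (hS i0 j0); apply/negP; rewrite negbK.
  have : SD i0 j0 *+ 2 = 0 by rewrite mulr2n -{1}h addNr.
  by move/eqP; rewrite mulrn_eq0.
- have eSt : SD - St = (SD i0 j0 *+ 2) *: delta_mx i0 j0.
    apply/matrixP => i j; rewrite !mxE; case: ifP => h.
      by case/andP: h => /eqP -> /eqP ->; rewrite mulr1 opprK mulr2n.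
    by rewrite subrr mulr0.
  apply: leq_trans (rank_col _ _) _.
  have r1 : (\rank (SD - St)%R <= 1)%N.
    by rewrite eSt; apply: leq_trans (mxrankS (scalemx_sub _ (submx_refl _))) _; rewrite mxrank_delta.
  by apply: leq_trans (leq_add r1 (leqnn _)) _; rewrite add1n.
Qed.

End Aux.

Unset Implicit Arguments.
Theorem theorem1 (R : realType) (B U I D : nat)
  (H : 'M[R[i]]_(B, U)) (J : 'M[R[i]]_(B, I))
  (SD : 'M[R[i]]_(U, D)) (WD : 'M[R[i]]_(I, D)) (Jdag : 'M[R[i]]_(I, B)) :
  (0 < B)%N -> (0 < U)%N -> (0 < I)%N -> (0 < D)%N -> (U + I <= B)%N ->
  \rank (row_mx H J) = (U + I)%N ->
  qpsk_mx SD ->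
  is_pinv J Jdag ->
  ~ eclipsed SD WD ->
  let YD := H *m SD + J *m WD in
  let obj := fun (P : 'M[R[i]]_B) (St : 'M[R[i]]_(U, D)) =>
               frob2 (P *m (YD - H *m St)) in
  let Phat := 1%:M - J *m Jdag in
  grass_proj B (B - I)%N Phat /\
  forall (P : 'M[R[i]]_B) (St : 'M[R[i]]_(U, D)),
    grass_proj B (B - I)%N P -> qpsk_mx St ->
    obj Phat SD <= obj P St /\ (obj P St <= obj Phat SD -> P = Phat /\ St = SD).
Proof.
move=> hB hU hI hD hUI hrk hS hpinv hne YD obj Phat.
have hIB : (I <= B)%N by apply: leq_trans hUI; rewrite leq_addl.
have hn : (B - (B - I) = I)%N by rewrite subKn.
have rJ : \rank J = I.
  apply/eqP; rewrite eqn_leq rank_leq_col /=.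
  have := rank_col H^T J^T; rewrite -tr_row_mx !mxrank_tr hrk => h.
  by rewrite -(leq_add2l U); apply: leq_trans h _; rewrite leq_add2r rank_leq_col.
have [Q0 [hQ0 eQ0]] := part1 rJ hpinv.
split.
  by rewrite /Phat -eQ0; apply: grass_of hQ0; rewrite hn.
have eYD : YD - H *m SD = J *m WD by rewrite /YD addrC addKr.
have obj0 : obj Phat SD = 0.
  have [pj1 _ _ _] := hpinv.
  rewrite /obj eYD /Phat mulmxA mulmxBl mul1mx -mulmxA (mulmxA J) pj1.
  by rewrite subrr mul0mx frob20.
move=> P St hP hSt; rewrite obj0; split; first exact: frob2_ge0.
move/frob2_le0 => PX0.
case: hP PX0 => Q; move: Q; rewrite /=.
move: (B - (B - I))%N hn => n hn Q [hQ eP] PX0; subst n.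
have eX : YD - H *m St = row_mx H J *m col_mx (SD - St) WD.
  by rewrite mul_row_col mulmxBr /YD addrAC.
have XQ : YD - H *m St = Q *m (adjmx Q *m (YD - H *m St)).
  by move: PX0; rewrite eP mulmxBl mul1mx mulmxA => /subr0_eq.
have rX : (\rank (YD - H *m St)%R <= I)%N.
  by rewrite XQ; apply: leq_trans (mxrankM_maxl _ _) (rank_leq_col _).
have hfree : row_free (row_mx H J)^T by rewrite /row_free mxrank_tr hrk.
have rC : \rank (col_mx (SD - St) WD) = \rank (YD - H *m St).
  by rewrite eX -[in RHS]mxrank_tr trmx_mul (mxrankMfree _ hfree) mxrank_tr.
have eSt : St = SD.
  case: (eqVneq St SD) => // /eqP hne'; exfalso; apply: hne.
  by exists St; split => //; rewrite rC.
split => //; subst St.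
have [Wr hWr] := row_freeP (WD_free hU hD hS hne).
have PJ : P *m J = 0.
  by rewrite -[J]mulmx1 -hWr !mulmxA -(mulmxA P) -eYD PX0 mul0mx.
have eJ : J = Q *m (adjmx Q *m J).
  by move: PJ; rewrite eP mulmxBl mul1mx mulmxA => /subr0_eq.
have sQ : (adjmx J <= adjmx Q)%MS.
  by rewrite {1}eJ adjmxM submxMl.
have sQJ : (adjmx Q <= adjmx J)%MS.
  have rQ : \rank Q = I.
    apply/eqP; rewrite eqn_leq rank_leq_col /= -{1}rJ -(rank_adjmx J) -(rank_adjmx Q).
    exact: mxrankS.
  have [_ <-] := mxrank_leqif_sup sQ.
  by rewrite !rank_adjmx rJ rQ.
have [M eM] := submxP sQJ.
rewrite eP /Phat (L_proj (M := adjmx M) (N := adjmx Q *m J) hpinv hQ) //.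
by rewrite -(adjmxK Q) eM adjmxM adjmxK.
Qed.
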